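(* Let $P\subset\mathbb{R}^{n+1}$ be an $n$-dimensional lattice polytope contained in the affine hyperplane $\{x_{n+1}=1\}$, of degree $d$, let $x$ be a lattice point in the relative interior of $(n-d+1)P$, and let $S\subset P$ be an $n$-dimensional lattice simplex with vertices $v_0,\dots,v_n$ such that $x$ lies in the cone spanned by $S$. Let $\sigma$ be the cone spanned by $P$. Then for every point $y\in\sigma$, $|V^-(y)|\le|Z^+(y)|$.
   Context: Lattice points are points of $\mathbb{Z}^{n+1}$. The degree $d$ of $P$ is the degree of the $h^*$-polynomial $h^*_P(t)$ defined by $\sum_{m\ge0}|mP\cap\mathbb{Z}^{n+1}|t^m=h^*_P(t)/(1-t)^{n+1}$; equivalently, $d$ is the largest nonnegative integer such that $(n-d)P$ has no lattice points in its relative interior. Every $y\in\mathbb{R}^{n+1}$ is written uniquely as $y=b_0(y)v_0+\dots+b_n(y)v_n$. $Z$ is the set of vertices $v_i$ of $S$ with $b_i(x)=0$; $V$ is the set of vertices $v_j$ of $S$ with $b_j(x)$ a positive integer. For $y\in\mathbb{R}^{n+1}$: $Z^+(y)$ (resp. $Z^-(y)$) is the set of $v_i\in Z$ with $b_i(y)>0$ (resp. $<0$), and $V^+(y)$ (resp. $V^-(y)$) is the set of $v_j\in V$ with $b_j(y)>0$ (resp. $<0$). *)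

(* Defs.v *)
From mathcomp Require Import all_boot all_order all_algebra.
From mathcomp Require Import reals.

Set Implicit Arguments. Unset Strict Implicit. Unset Printing Implicit Defensive.
Import Order.TTheory GRing.Theory Num.Theory.
Local Open Scope ring_scope.

(* Points of R^{n+1} are row vectors 'rV[R]_n.+1; coordinate x_{n+1} is
   the entry at index ord_max. *)

Definition lattice_pt (R : realType) (n : nat) (x : 'rV[R]_n.+1) : Prop :=
  forall i : 'I_n.+1, exists z : int, x ord0 i = z%:~R.

Definition conv_hull (R : realType) (n : nat) (A : seq 'rV[R]_n.+1)
    (y : 'rV[R]_n.+1) : Prop :=
  exists l : 'I_(size A) -> R, (forall i, 0 <= l i) /\ \sum_i l i = 1 /\
    y = \sum_i l i *: A`_i.

Definition aff_hull (R : realType) (n : nat) (A : seq 'rV[R]_n.+1)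
    (y : 'rV[R]_n.+1) : Prop :=
  exists l : 'I_(size A) -> R, \sum_i l i = 1 /\ y = \sum_i l i *: A`_i.

Definition cone_hull (R : realType) (n : nat) (A : seq 'rV[R]_n.+1)
    (y : 'rV[R]_n.+1) : Prop :=
  exists l : 'I_(size A) -> R, (forall i, 0 <= l i) /\ y = \sum_i l i *: A`_i.

Definition relint_conv (R : realType) (n : nat) (A : seq 'rV[R]_n.+1)
    (x : 'rV[R]_n.+1) : Prop :=
  conv_hull A x /\
  exists e : R, 0 < e /\ forall z, aff_hull A z ->
    (forall i, `|z ord0 i - x ord0 i| < e) -> conv_hull A z.

Definition dilate (R : realType) (n : nat) (k : nat) (A : seq 'rV[R]_n.+1) :=
  map (fun a => k%:R *: a) A.

Definition affdim (R : realType) (n : nat) (A : seq 'rV[R]_n.+1) : nat :=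
  \rank (\matrix_(i < size A) (A`_i - A`_0)).

Definition lattice_polytope_H1 (R : realType) (n : nat) (A : seq 'rV[R]_n.+1) :=
  A != [::] /\ (forall a, a \in A -> lattice_pt a /\ a ord0 ord_max = 1).

(* degree of the (n-dimensional) lattice polytope P = conv A:
   d = n+1 - min{k >= 1 | kP has a lattice point in its relative interior} *)
Definition degree (R : realType) (n : nat) (A : seq 'rV[R]_n.+1) (d : nat) :=
  (d <= n)%N /\
  (exists x, lattice_pt x /\ relint_conv (dilate (n + 1 - d) A) x) /\
  (forall k : nat, (1 <= k <= n - d)%N ->
     forall x, lattice_pt x -> ~ relint_conv (dilate k A) x).

Definition simplex_mx (R : realType) (n : nat) (v : 'I_n.+1 -> 'rV[R]_n.+1)
  : 'M[R]_n.+1 := \matrix_(i < n.+1) v i.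

Definition cone_fun (R : realType) (n : nat) (v : 'I_n.+1 -> 'rV[R]_n.+1)
    (y : 'rV[R]_n.+1) : Prop :=
  exists l : 'I_n.+1 -> R, (forall i, 0 <= l i) /\ y = \sum_i l i *: v i.

(* barycentric coordinates: y = \sum_i b_i(y) v_i, b_i(y) = bary v y i *)
Definition bary (R : realType) (n : nat) (v : 'I_n.+1 -> 'rV[R]_n.+1)
    (y : 'rV[R]_n.+1) (i : 'I_n.+1) : R :=
  (y *m invmx (simplex_mx v)) ord0 i.

Definition Zset (R : realType) (n : nat) (v : 'I_n.+1 -> 'rV[R]_n.+1)
    (x : 'rV[R]_n.+1) : {set 'I_n.+1} :=
  [set i | bary v x i == 0].

Definition Vset (R : realType) (n : nat) (v : 'I_n.+1 -> 'rV[R]_n.+1)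
    (x : 'rV[R]_n.+1) : {set 'I_n.+1} :=
  [set j | (bary v x j \is a Num.nat) && (0 < bary v x j)].

Definition Zplus R n v x y : {set 'I_n.+1} :=
  [set i in @Zset R n v x | 0 < bary v y i].
Definition Vminus R n v x y : {set 'I_n.+1} :=
  [set j in @Vset R n v x | bary v y j < 0].

(* Main.v *)
Require Import Defs.
From mathcomp Require Import all_boot all_order all_algebra.
From mathcomp Require Import reals.
From mathcomp Require Import ring lra zify.
Import Order.TTheory GRing.Theory Num.Theory.
Local Open Scope ring_scope.
Set Implicit Arguments. Unset Strict Implicit.

Section Hulls.
Variables (R : realType) (n : nat).
Implicit Types (A B : seq 'rV[R]_n.+1) (z : 'rV[R]_n.+1).

Definition extf (m : nat) (l : 'I_m -> R) (j : nat) : R :=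
  oapp l 0 (insub j : option 'I_m).

Lemma extfE m (l : 'I_m -> R) (i : 'I_m) : extf l i = l i.
Proof. by rewrite /extf valK. Qed.

Lemma extf_ge0 m (l : 'I_m -> R) : (forall i, 0 <= l i) -> forall j, 0 <= extf l j.
Proof. by move=> h j; rewrite /extf; case: insubP => [i _ _|_] /=. Qed.

Lemma coneN B z : cone_hull B z <->
  exists f : nat -> R, (forall i, 0 <= f i) /\ z = \sum_(i < size B) f i *: B`_i.
Proof.
split.
  move=> [l [l0 ->]]; exists (extf l); split; first exact: extf_ge0.
  by apply: eq_bigr => i _; rewrite extfE.
by move=> [f [f0 ->]]; exists (fun i => f i).
Qed.

Lemma convN B z : conv_hull B z <->
  exists f : nat -> R, (forall i, 0 <= f i) /\ \sum_(i < size B) f i = 1 /\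
     z = \sum_(i < size B) f i *: B`_i.
Proof.
split.
  move=> [l [l0 [l1 ->]]]; exists (extf l); split; first exact: extf_ge0.
  split; first by rewrite -l1; apply: eq_bigr => i _; rewrite extfE.
  by apply: eq_bigr => i _; rewrite extfE.
by move=> [f [f0 [f1 ->]]]; exists (fun i => f i).
Qed.

Lemma affN B z : aff_hull B z <->
  exists f : nat -> R, \sum_(i < size B) f i = 1 /\
     z = \sum_(i < size B) f i *: B`_i.
Proof.
split.
  move=> [l [l1 ->]]; exists (extf l).
  split; first by rewrite -l1; apply: eq_bigr => i _; rewrite extfE.
  by apply: eq_bigr => i _; rewrite extfE.
by move=> [f [f1 ->]]; exists (fun i => f i).
Qed.

Lemma nth_dilate k A i : (dilate k A)`_i = k%:R *: A`_i.
Proof.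
rewrite /dilate; case: (ltnP i (size A)) => h; first by rewrite (nth_map 0).
by rewrite !nth_default ?size_map // scaler0.
Qed.

Lemma size_dilate k A : size (dilate k A) = size A.
Proof. by rewrite size_map. Qed.

Lemma convD k A z : (0 < k)%N -> conv_hull (dilate k A) z <->
  exists f : nat -> R, (forall i, 0 <= f i) /\ \sum_(i < size A) f i = k%:R /\
     z = \sum_(i < size A) f i *: A`_i.
Proof.
move=> k0; have kR : (k%:R : R) != 0 by rewrite pnatr_eq0 -lt0n.
rewrite convN size_dilate; split.
  move=> [f [f0 [f1 ->]]]; exists (fun i => k%:R * f i); split.
    by move=> i; rewrite mulr_ge0.
  split; first by rewrite -mulr_sumr f1 mulr1.
  by apply: eq_bigr => i _; rewrite nth_dilate scalerA mulrC.
move=> [f [f0 [f1 ->]]]; exists (fun i => f i / k%:R); split.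
  by move=> i; rewrite divr_ge0.
split; first by rewrite -mulr_suml f1 divff.
apply: eq_bigr => i _; rewrite nth_dilate scalerA; congr (_ *: _).
by rewrite divfK.
Qed.

Lemma affD k A z : (0 < k)%N -> aff_hull (dilate k A) z <->
  exists f : nat -> R, \sum_(i < size A) f i = k%:R /\
     z = \sum_(i < size A) f i *: A`_i.
Proof.
move=> k0; have kR : (k%:R : R) != 0 by rewrite pnatr_eq0 -lt0n.
rewrite affN size_dilate; split.
  move=> [f [f1 ->]]; exists (fun i => k%:R * f i).
  split; first by rewrite -mulr_sumr f1 mulr1.
  by apply: eq_bigr => i _; rewrite nth_dilate scalerA mulrC.
move=> [f [f1 ->]]; exists (fun i => f i / k%:R).
split; first by rewrite -mulr_suml f1 divff.
apply: eq_bigr => i _; rewrite nth_dilate scalerA; congr (_ *: _).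
by rewrite divfK.
Qed.


Section Cone.
Variables (A : seq 'rV[R]_n.+1).
Hypothesis HA : forall a, a \in A -> a ord0 ord_max = 1.

Lemma ht_comb (f : nat -> R) :
  (\sum_(i < size A) f i *: A`_i) ord0 ord_max = \sum_(i < size A) f i.
Proof.
rewrite summxE; apply: eq_bigr => i _; rewrite mxE HA ?mulr1 //.
exact: mem_nth.
Qed.

Lemma cone_ht z : cone_hull A z -> 0 <= z ord0 ord_max.
Proof.
by move=> /coneN [f [f0 ->]]; rewrite ht_comb; apply: sumr_ge0.
Qed.

Lemma cone_conv k z : (0 < k)%N -> cone_hull A z -> z ord0 ord_max = k%:R ->
  conv_hull (dilate k A) z.
Proof.
move=> k0 /coneN [f [f0 zE]] hz; apply/convD => //; exists f.
by split => //; split => //; rewrite -hz zE ht_comb.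
Qed.

Lemma conv_cone k z : (0 < k)%N -> conv_hull (dilate k A) z ->
  cone_hull A z /\ z ord0 ord_max = k%:R.
Proof.
move=> k0 /convD => /(_ k0) [f [f0 [f1 zE]]]; split.
  by apply/coneN; exists f.
by rewrite zE ht_comb.
Qed.

Lemma aff_ht k z : (0 < k)%N -> aff_hull (dilate k A) z -> z ord0 ord_max = k%:R.
Proof.
by move=> k0 /affD => /(_ k0) [f [f1 ->]]; rewrite ht_comb.
Qed.

Lemma cone0 : cone_hull A 0.
Proof.
apply/coneN; exists (fun _ => 0); split => //.
by rewrite big1 // => i _; rewrite scale0r.
Qed.

Lemma coneD z1 z2 : cone_hull A z1 -> cone_hull A z2 -> cone_hull A (z1 + z2).
Proof.
move=> /coneN [f [f0 ->]] /coneN [g [g0 ->]]; apply/coneN.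
exists (fun i => f i + g i); split; first by move=> i; rewrite addr_ge0.
by rewrite -big_split /=; apply: eq_bigr => i _; rewrite scalerDl.
Qed.

Lemma coneZ a z : 0 <= a -> cone_hull A z -> cone_hull A (a *: z).
Proof.
move=> a0 /coneN [f [f0 ->]]; apply/coneN.
exists (fun i => a * f i); split; first by move=> i; rewrite mulr_ge0.
by rewrite scaler_sumr; apply: eq_bigr => i _; rewrite scalerA.
Qed.

Lemma cone_sumZ (I : finType) (c : I -> R) (u : I -> 'rV[R]_n.+1) :
  (forall i, 0 <= c i) -> (forall i, cone_hull A (u i)) ->
  cone_hull A (\sum_i c i *: u i).
Proof.
move=> c0 u0; apply: (big_ind (cone_hull A)); first exact: cone0.
  exact: coneD.
by move=> i _; apply: coneZ.
Qed.

Lemma conv_cone_hull z : conv_hull A z -> cone_hull A z.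
Proof.
by move=> /convN [f [f0 [_ ->]]]; apply/coneN; exists f.
Qed.

Lemma relint_shift k0 h x w eps c0 : (0 < k0)%N -> (0 < h)%N ->
  relint_conv (dilate k0 A) x -> 0 < eps -> cone_hull A c0 ->
  w = eps *: x + c0 -> w ord0 ord_max = h%:R -> relint_conv (dilate h A) w.
Proof.
move=> k00 h0 [xc [e [e0 He]]] eps0 c0c wE wht.
have [xcone xht] := conv_cone k00 xc.
have wcone : cone_hull A w.
  by rewrite wE; apply: coneD => //; apply: coneZ => //; apply: ltW.
have wconv := cone_conv h0 wcone wht.
split => //; exists (eps * e); split; first exact: mulr_gt0.
move=> z zaff zclose.
have zht := aff_ht h0 zaff.
pose z' := x + eps^-1 *: (z - w).
have z'aff : aff_hull (dilate k0 A) z'.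
  apply/affD => //.
  move: xc => /convD => /(_ k00) [P [_ [P1 PE]]].
  move: zaff => /affD => /(_ h0) [G [G1 GE]].
  move: wconv => /convD => /(_ h0) [M [_ [M1 ME]]].
  exists (fun i => P i + eps^-1 * (G i - M i)); split.
    by rewrite big_split /= -mulr_sumr sumrB P1 G1 M1 subrr mulr0 addr0.
  rewrite /z' {1}PE {1}GE {1}ME.
  rewrite [RHS](eq_bigr (fun i : 'I_(size A) =>
     P i *: A`_i + eps^-1 *: (G i *: A`_i - M i *: A`_i))); last first.
    by move=> i _; rewrite scalerDl -scalerA scalerBl.
  by rewrite big_split /= -scaler_sumr sumrB.
have z'close : forall i, `|z' ord0 i - x ord0 i| < e.
  move=> i; rewrite /z' !mxE addrC addKr normrM gtr0_norm ?invr_gt0 //.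
  rewrite -(ltr_pM2l eps0) mulrA mulfV ?mulr1 ?gt_eqF //.
  by rewrite mulrC mulr1; apply: zclose.
have z'conv := He z' z'aff z'close.
have [z'cone _] := conv_cone k00 z'conv.
apply: cone_conv => //.
have -> : z = eps *: z' + c0.
  rewrite /z' scalerDr scalerA mulfV ?gt_eqF // scale1r.
  by rewrite addrAC -wE addrC subrK.
apply: coneD => //; apply: coneZ => //; exact: ltW.
Qed.

End Cone.

Section Simplex.
Variable v : 'I_n.+1 -> 'rV[R]_n.+1.
Hypothesis Hv : forall i, v i ord0 ord_max = 1.
Hypothesis Hrank : \rank (\matrix_(i < n.+1) (v i - v ord0)) = n.

Lemma simplex_unit : simplex_mx v \in unitmx.
Proof.
set M := simplex_mx v; set D := \matrix_(i < n.+1) (v i - v ord0).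
have Hv' i (k : 'I_1) : v i k ord_max = 1 by rewrite (ord1 k).
have vM i : (v i <= M)%MS by apply: (eq_row_sub i); rewrite rowK.
have DM : (D <= M)%MS.
  apply/row_subP => i; rewrite rowK; apply: addmx_sub => //.
  by rewrite eqmx_opp.
have v0D : ~~ (v ord0 <= D)%MS.
  apply/negP => /submxP [X hX].
  have := congr1 (fun m : 'rV[R]_n.+1 => m ord0 ord_max) hX => /=.
  rewrite Hv mxE big1; first by move/eqP; rewrite oner_eq0.
  move=> k _; rewrite !mxE !Hv'; by rewrite subrr mulr0.
have rv0 : \rank (v ord0) = 1%N.
  apply/eqP; rewrite eqn_leq rank_leq_row lt0n mxrank_eq0.
  apply/negP => /eqP h0; have := Hv ord0; rewrite h0 mxE => /eqP.
  by rewrite eq_sym oner_eq0.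
have cap0 : \rank (D :&: v ord0)%MS = 0%N.
  have := mxrankS (capmxSr D (v ord0)); rewrite rv0.
  case h: (\rank (D :&: v ord0)%MS) => [|[|m]] hle //; exfalso.
  have := (mxrank_leqif_sup (capmxSr D (v ord0))).2.
  rewrite h rv0 eqxx => /esym hs.
  by move/negP: v0D; apply; apply: submx_trans (capmxSl D (v ord0)).
have := mxrank_sum_cap D (v ord0); rewrite cap0 Hrank rv0 addn0 => hsum.
have : (\rank (D + v ord0)%MS <= \rank M)%N by apply: mxrankS; rewrite addsmx_sub DM vM.
rewrite hsum addn1 => hM.
rewrite -row_free_unit /row_free eqn_leq rank_leq_row.
exact: hM.
Qed.

Lemma bary_sum z : z = \sum_i bary v z i *: v i.
Proof.
rewrite -{1}[z](mulmxKV simplex_unit) mulmx_sum_row.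
by apply: eq_bigr => i _; rewrite rowK.
Qed.

Lemma bary_comb (f : 'I_n.+1 -> R) j : bary v (\sum_i f i *: v i) j = f j.
Proof.
have -> : \sum_i f i *: v i = (\row_i f i) *m simplex_mx v.
  by rewrite mulmx_sum_row; apply: eq_bigr => i _; rewrite rowK mxE.
by rewrite /bary mulmxK ?simplex_unit // mxE.
Qed.

Lemma ht_vcomb (f : 'I_n.+1 -> R) :
  (\sum_i f i *: v i) ord0 ord_max = \sum_i f i.
Proof.
by rewrite summxE; apply: eq_bigr => i _; rewrite mxE Hv mulr1.
Qed.

End Simplex.

Lemma eps_exists (I : finType) (a b : I -> R) :
  (forall i, 0 < a i \/ (0 <= a i /\ b i <= 0)) ->
  exists2 e, 0 < e & forall i, e * b i <= a i.
Proof.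
move=> hab.
pose S := \sum_i (if 0 < a i then `|b i| / a i else 0).
have S0 : 0 <= S by apply: sumr_ge0 => j _; case: ifP => hj //; rewrite divr_ge0 // ltW.
exists (1 + S)^-1; first by rewrite invr_gt0; lra.
move=> i; case: (hab i) => [ai|[ai bi]].
  have hS : `|b i| / a i <= S.
    rewrite /S (bigD1 i) //= ai lerDl; apply: sumr_ge0 => j _.
    by case: ifP => hj //; rewrite divr_ge0 // ltW.
  move: hS; rewrite ler_pdivrMr // => hS.
  have hb : b i <= `|b i| by apply: ler_norm.
  rewrite mulrC ler_pdivrMr; last by lra.
  nra.
apply: le_trans ai; apply: mulr_ge0_le0 => //.
by rewrite invr_ge0; lra.
Qed.

Lemma sum_ind (m : nat) (S : {set 'I_m}) :
  \sum_i ((i \in S)%:R : R) = #|S|%:R.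
Proof.
rewrite -sum1_card natr_sum [RHS]big_mkcond /=.
by apply: eq_bigr => i _; case: (i \in S).
Qed.

End Hulls.

Theorem lemma2p4 (R : realType) (n d : nat) (A : seq 'rV[R]_n.+1)
    (x : 'rV[R]_n.+1) (v : 'I_n.+1 -> 'rV[R]_n.+1) :
  lattice_polytope_H1 A -> affdim A = n -> @degree R n A d ->
  lattice_pt x -> relint_conv (dilate (n - d + 1) A) x ->
  (forall i, lattice_pt (v i)) -> (forall i, conv_hull A (v i)) ->
  \rank (\matrix_(i < n.+1) (v i - v ord0)) = n ->
  cone_fun v x ->
  forall y : 'rV[R]_n.+1, cone_hull A y ->
  (#|Vminus v x y| <= #|Zplus v x y|)%N.
Proof.
move=> [_ HA'] _ [dn [_ Hdeg]] xlat xrel vlat vconv Hrank [l [l0 xE]] y ycone.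
have HA : forall a, a \in A -> a ord0 ord_max = 1 by move=> a /HA' [].
have Hv : forall i, v i ord0 ord_max = 1.
  by move=> i; have /convN [f [_ [f1 ->]]] := vconv i; rewrite ht_comb.
have vcone i : cone_hull A (v i) by apply: conv_cone_hull.
pose k0 := (n - d + 1)%N.
have k00 : (0 < k0)%N by rewrite /k0 addn1.
have [xcone xht] := conv_cone HA k00 xrel.1.
pose Bx := bary v x; pose By := bary v y.
have xS : x = \sum_i Bx i *: v i := bary_sum Hv Hrank x.
have yS : y = \sum_i By i *: v i := bary_sum Hv Hrank y.
have Bx0 i : 0 <= Bx i by rewrite /Bx xE bary_comb.
rewrite leqNgt; apply/negP => Hlt.
set Zp := Zplus v x y in Hlt *; set Vm := Vminus v x y in Hlt *.
pose t i : R := (i \in Zp)%:R - (i \in Vm)%:R.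
pose w := x + \sum_i t i *: v i.
pose K := \sum_i (if By i < 0 then Bx i / (- By i) else 0).
have K0 : 0 <= K.
  by apply: sumr_ge0 => j _; case: ifP => // hj; rewrite divr_ge0 // oppr_ge0 ltW.
have HK i : By i < 0 -> K * By i <= - Bx i.
  move=> hi.
  have hK : Bx i / (- By i) <= K.
    rewrite /K (bigD1 i) //= hi lerDl; apply: sumr_ge0 => j _.
    by case: ifP => // hj; rewrite divr_ge0 // oppr_ge0 ltW.
  have : K * (- By i) >= Bx i.
    by rewrite -ler_pdivrMr // oppr_gt0.
  lra.
pose alpha i := Bx i + t i.
pose beta i := Bx i + K * By i.
have Hab i : 0 < alpha i \/ (0 <= alpha i /\ beta i <= 0).
  rewrite /alpha /beta /t.
  case Vi : (i \in Vm).
    rewrite !inE in Vi; case/andP: Vi => /andP [/natrP [m hm] bpos] byn.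
    rewrite -/Bx in hm bpos; rewrite -/By in byn.
    have -> : (i \in Zp) = false.
      by rewrite !inE -/Bx hm; apply/negP => /andP [/eqP h _];
         move: bpos; rewrite hm h ltxx.
    right; split.
      move: bpos; rewrite hm ltr0n => hm0.
      have : (1 <= m%:R :> R) by rewrite ler1n.
      rewrite /=; lra.
    have := HK i byn; rewrite /=; lra.
  case Zi : (i \in Zp).
    by left; have := Bx0 i; rewrite /=; lra.
  have [bp|bn] := ltP 0 (Bx i).
    by left; rewrite /= subrr addr0.
  right; have bz : Bx i = 0 by apply/le_anti; rewrite bn Bx0.
  rewrite /= subrr addr0 bz add0r; split => //.
  have : ~~ (0 < By i).
    by apply/negP => hy; move: Zi; rewrite !inE -/Bx -/By bz eqxx hy.
  rewrite -leNgt => hy; exact: mulr_ge0_le0.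
have [eps eps0 Heps] := eps_exists Hab.
pose c := \sum_i (alpha i - eps * beta i) *: v i.
have ccone : cone_hull A c.
  by apply: cone_sumZ => // i; rewrite subr_ge0.
pose c0 := (K * eps) *: y + c.
have c0cone : cone_hull A c0.
  apply: coneD => //; apply: coneZ => //; rewrite mulr_ge0 // ltW //.
have wE : w = eps *: x + c0.
  rewrite /w /c0 /c {1}xS [in RHS]xS yS !scaler_sumr -!big_split /=.
  apply: eq_bigr => i _; rewrite !scalerA -!scalerDl; congr (_ *: _).
  rewrite /alpha /beta; ring.
have wht : w ord0 ord_max = k0%:R + #|Zp|%:R - #|Vm|%:R.
  rewrite /w mxE ht_vcomb // xht sumrB !sum_ind; ring.
have wpos : 0 < w ord0 ord_max.
  rewrite wE mxE [_ ord0 ord_max](_ : _ = eps * k0%:R); last by rewrite mxE xht.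
  have := cone_ht HA c0cone; have : 0 < eps * k0%:R by rewrite mulr_gt0 // ltr0n.
  lra.
have hlt2 : (#|Vm| < k0 + #|Zp|)%N.
  by rewrite -(ltr_nat R) natrD; move: wpos; rewrite wht; lra.
pose h := (k0 + #|Zp| - #|Vm|)%N.
have hht : w ord0 ord_max = h%:R by rewrite wht /h natrB ?natrD // ltnW.
have h0 : (0 < h)%N by rewrite /h subn_gt0.
have hle : (1 <= h <= n - d)%N by rewrite /h /k0; apply/andP; split; lia.
have wrel : relint_conv (dilate h A) w :=
  relint_shift HA k00 h0 xrel eps0 c0cone wE hht.
have wlat : lattice_pt w.
  move=> j; apply/intrP; rewrite /w mxE summxE.
  apply: rpredD; first by apply/intrP; apply: xlat.
  apply: rpred_sum => i _; rewrite mxE; apply: rpredM.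
    by rewrite /t; apply: rpredB; apply: natr_int.
  by apply/intrP; apply: vlat.
exact: (Hdeg h hle w wlat wrel).
Qed.
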